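(* Let $G=(V,E)$ be a bridgeless connected graph with no $2$-edge-cut, and assume all roots of $F(G,\lambda)$ are real. Let $\gamma$ be the number of $3$-edge-cuts of $G$ and $r=|E|-|V|+1$. Then $$\gamma\ge \frac{(|E|-r)(|E|-1)}{2(r-1)},$$ and the inequality is strict if $r-1$ does not divide $|E|-1$.
   Context: Graphs are finite, undirected, possibly with loops and parallel edges. The flow polynomial $F(G,\lambda)$ is determined by: $F(G,\lambda)=1$ if $E(G)=\emptyset$; $F(G,\lambda)=0$ if $G$ has a bridge; multiplicative over disjoint unions; $F(G,\lambda)=(\lambda-1)F(G-e,\lambda)$ if $e$ is a loop; otherwise $F(G,\lambda)=F(G/e,\lambda)-F(G-e,\lambda)$ ($G/e$ = contraction of $e$). A $k$-edge-cut is a set of $k$ edges whose deletion increases the number of components. *)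

(* Defs.v *)
From HB Require Import structures.
From mathcomp Require Import all_boot all_order all_algebra all_field.
Set Implicit Arguments. Unset Strict Implicit. Unset Printing Implicit Defensive.
Import Order.TTheory GRing.Theory Num.Theory.

(* A finite multigraph (loops and parallel edges allowed) is given by a
   finite vertex type V, a finite edge type E and an endpoint map
   ends : E -> V * V (a loop is an edge e with ends e = (v, v)). *)

Section Graph.
Variables (V E : finType) (ends : E -> V * V).

Definition adjE (A : {set E}) : rel V :=
  fun x y => [exists e in A, (ends e == (x, y)) || (ends e == (y, x))].

Definition ncomp (A : {set E}) : nat := n_comp (adjE A) predT.

Definition edge_cut (S : {set E}) : bool := ncomp setT < ncomp (~: S).

Definition k_edge_cut (k : nat) (S : {set E}) : bool := (#|S| == k) && edge_cut S.

Definition connectedG : bool := ncomp setT == 1%N.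

Definition n_3cuts : nat := #|[set S : {set E} | k_edge_cut 3 S]|.

(* flow polynomial, via the standard subset expansion
   F(G,x) = sum_{A subset E} (-1)^{|E|-|A|} x^{|A| - |V| + c(A)} *)
Definition flow_poly : {poly int} :=
  \sum_(A : {set E}) ((-1) ^+ (#|E| - #|A|)) *: 'X^(#|A| + ncomp A - #|V|).

End Graph.

(* Main.v *)
Require Import Defs.
From HB Require Import structures.
From mathcomp Require Import all_boot all_order all_algebra all_field.
From mathcomp Require Import zify ring lra.
Import Order.TTheory GRing.Theory Num.Theory.
Set Implicit Arguments. Unset Strict Implicit. Unset Printing Implicit Defensive.

Lemma adjE_sym (V E : finType) (ends : E -> V * V) A : symmetric (adjE ends A).
Proof.
move=> x y; rewrite /adjE; apply/existsP/existsP => -[e He]; exists e;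
  by rewrite orbC.
Qed.

Lemma csym (V E : finType) (ends : E -> V * V) A : connect_sym (adjE ends A).
Proof. exact/sym_connect_sym/adjE_sym. Qed.

Lemma adjE_U1 (V E : finType) (ends : E -> V * V) A e x y :
  adjE ends (e |: A) x y =
  [|| adjE ends A x y, ends e == (x, y) | ends e == (y, x)].
Proof.
rewrite /adjE; apply/existsP/idP => [[f]|].
  case/andP; rewrite !inE => /orP[/eqP->|fA] H.
    by rewrite H orbT.
  by apply/orP; left; apply/existsP; exists f; rewrite fA.
case/or3P => [/existsP[f /andP[fA H]]|H|H].
- by exists f; rewrite !inE fA orbT.
- by exists e; rewrite !inE eqxx H.
- by exists e; rewrite !inE eqxx H orbT.
Qed.

Lemma ncompU1 (V E : finType) (ends : E -> V * V) A e :
  ncomp ends A = ncomp ends (e |: A) +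
     ~~ connect (adjE ends A) (ends e).1 (ends e).2.
Proof.
set u := (ends e).1; set v := (ends e).2.
set r := adjE ends A; set r' := adjE ends (e |: A).
have symr := csym ends A; have symr' := csym ends (e |: A).
have sub : subrel (connect r) (connect r').
  apply: connect_sub => x y rxy; apply: connect1.
  by rewrite /r' adjE_U1 -/r rxy.
have euv : r' u v by rewrite /r' adjE_U1 /u /v -surjective_pairing eqxx orbT.
set a := closure r (pred2 u v).
have cla : closed r a by apply: closure_closed.
have ua : u \in a by apply: mem_closure; rewrite !inE eqxx.
have va : v \in a by apply: mem_closure; rewrite !inE eqxx orbT.
have cla' : closed r' a.
  apply: intro_closed => // x y; rewrite /r' adjE_U1 -/r => /or3P[rxy|H|H] xa.
  - by rewrite -(cla x y rxy).
  - by have -> : y = v by rewrite /v (eqP H).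
  - by have -> : y = u by rewrite /u (eqP H).
have n1 : n_comp r' a = 1.
  rewrite -(n_comp_connect symr' u); apply: eq_n_comp_r => x.
  apply/idP/idP => [xa|cux]; last by rewrite -(closed_connect cla' cux).
  move: xa; rewrite /a /= unfold_in; case/pred0Pn => z /andP[/= cxz].
  change (is_true (connect r x z)) in cxz; change (is_true (z \in pred2 u v) -> is_true (connect r' u x)).
  rewrite symr'; case/pred2P => Hz; subst z.
    by apply: sub.
  apply: (connect_trans (sub _ _ cxz)); rewrite symr'.
  exact: connect1.
have n2 : n_comp r a = (~~ connect r u v).+1 by apply: n_comp_closure2.
have n3 : n_comp r' [predC a] = n_comp r [predC a].
  apply: eq_card => x; rewrite !inE.
  case xa: (x \in a); rewrite ?andbF // !andbT.
  have eqc : connect r' x =1 connect r x.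
    move=> y; apply/idP/idP; last by apply: sub.
    have clx : closed r' (connect r x).
      apply: intro_closed => // y1 z; rewrite /r' adjE_U1 -/r.
      case/or3P => [ryz|H|H] cxy.
      + by apply: connect_trans cxy (connect1 ryz).
      + have Hy : y1 = u by rewrite /u (eqP H).
        by move: xa; rewrite Hy in cxy; rewrite (closed_connect cla cxy) ua.
      + have Hy : y1 = v by rewrite /v (eqP H).
        by move: xa; rewrite Hy in cxy; rewrite (closed_connect cla cxy) va.
    move=> cxy; have := closed_connect clx cxy.
    by rewrite !inE connect0 => <-.
  by rewrite /roots /root; congr (odflt _ _ == _); apply: eq_pick.

rewrite /ncomp -/r -/r' (n_compC a r) (n_compC a r') n1 n2 n3.
by case: (connect r u v); rewrite ?addn0 ?addn1 ?add1n ?addSn.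

Qed.

Lemma ncomp0 (V E : finType) (ends : E -> V * V) : ncomp ends set0 = #|V|.
Proof.
have c0 x y : connect (adjE ends set0) x y -> y = x.
  case/connectP => -[|z p] /=; first by move=> _ ->.
  by case/andP => /existsP[f]; rewrite inE.
rewrite /ncomp /n_comp_mem; apply: eq_card => x; rewrite !inE /= andbT.
by apply/eqP/c0/connect_root.
Qed.

Lemma ncomp_gt0 (V E : finType) (ends : E -> V * V) (v0 : V) A :
  (0 < ncomp ends A)%N.
Proof.
rewrite /ncomp /n_comp_mem; apply/card_gt0P; exists (fingraph.root (adjE ends A) v0).
by rewrite !inE /= roots_root //; apply: csym.
Qed.

Lemma ncomp_le (V E : finType) (ends : E -> V * V) (A : {set E}) e :
  (ncomp ends A <= ncomp ends (e |: A) + 1)%N.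
Proof. by rewrite (ncompU1 ends A e) leq_add2l leq_b1. Qed.

Lemma ncomp_conn (V E : finType) (ends : E -> V * V) (A : {set E}) e :
  connect (adjE ends A) (ends e).1 (ends e).2 ->
  ncomp ends (e |: A) = ncomp ends A.
Proof. by move=> H; rewrite (ncompU1 ends A e) H addn0. Qed.

Lemma ncomp_low (V E : finType) (ends : E -> V * V) (A : {set E}) :
  (#|V| <= #|A| + ncomp ends A)%N.
Proof.
move Hn : #|A| => n; elim: n A Hn => [|n IH] A Hn.
  by move/eqP: Hn; rewrite cards_eq0 => /eqP->; rewrite ncomp0.
have [e eA] : exists e, e \in A.
  by apply/set0Pn; rewrite -card_gt0 Hn.
have HA : A = e |: (A :\ e) by rewrite setD1K.
have h1 : #|A :\ e| = n by move: Hn; rewrite (cardsD1 e A) eA add1n => -[].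
have := IH _ h1; have := ncomp_le ends (A :\ e) e; rewrite -HA.
lia.
Qed.

Lemma ncomp_union (V E : finType) (ends : E -> V * V) (T B : {set E}) :
  (ncomp ends B <= ncomp ends (B :|: T) + #|T|)%N.
Proof.
move Hn : #|T| => n; elim: n T Hn => [|n IH] T Hn.
  by move/eqP: Hn; rewrite cards_eq0 => /eqP->; rewrite setU0 addn0.
have [e eT] : exists e, e \in T.
  by apply/set0Pn; rewrite -card_gt0 Hn.
have HT : B :|: T = e |: (B :|: (T :\ e)) by rewrite setUCA setD1K.
have h1 : #|T :\ e| = n by move: Hn; rewrite (cardsD1 e T) eT add1n => -[].
have := IH _ h1; have := ncomp_le ends (B :|: (T :\ e)) e; rewrite -HT.
lia.
Qed.

Lemma edge_in (V E : finType) (ends : E -> V * V) (A : {set E}) e :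
  adjE ends (e |: A) (ends e).1 (ends e).2.
Proof. by rewrite adjE_U1 -surjective_pairing eqxx orbT. Qed.

Lemma setC_D1 (E : finType) (S : {set E}) e :
  e |: ~: S = ~: (S :\ e).
Proof. by apply/setP => x; rewrite !inE negb_and negbK orbC. Qed.

Lemma ncomp_step (V E : finType) (ends : E -> V * V) (S : {set E}) e :
  (ncomp ends (~: S) <= ncomp ends (~: (S :\ e)) + 1)%N.
Proof. by rewrite -setC_D1 ncomp_le. Qed.

Lemma ncomp_le_card (V E : finType) (ends : E -> V * V) (A : {set E}) :
  (ncomp ends A <= #|V|)%N.
Proof. exact: max_card. Qed.

Lemma cS2 (V E : finType) (ends : E -> V * V) :
  connectedG ends ->
  (forall S : {set E}, ~~ k_edge_cut ends 1 S) ->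
  (forall S : {set E}, ~~ k_edge_cut ends 2 S) ->
  forall S : {set E}, (#|S| <= 2)%N -> ncomp ends (~: S) = 1%N.
Proof.
move=> /eqP hc h1 h2 S hS.
have [v0 _] : exists v0 : V, true.
  have : (0 < #|V|)%N by have := ncomp_le_card ends setT; rewrite hc.
  by case/card_gt0P => v0 _; exists v0.
have g1 := ncomp_gt0 ends v0 (~: S).
have : (#|S| == 0 \/ #|S| == 1 \/ #|S| == 2)%N by lia.
case=> [|[]] H.
- by move: H; rewrite cards_eq0 => /eqP->; rewrite setC0.
- have := h1 S; rewrite /k_edge_cut H /edge_cut hc /=; lia.
- have := h2 S; rewrite /k_edge_cut H /edge_cut hc /=; lia.
Qed.

Lemma cS3 (V E : finType) (ends : E -> V * V) :
  connectedG ends ->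
  (forall S : {set E}, ~~ k_edge_cut ends 1 S) ->
  (forall S : {set E}, ~~ k_edge_cut ends 2 S) ->
  forall S : {set E}, #|S| = 3 -> (ncomp ends (~: S) <= 2)%N.
Proof.
move=> hc h1 h2 S hS.
have [e eS] : exists e, e \in S by apply/set0Pn; rewrite -card_gt0 hS.
have := ncomp_step ends S e; rewrite (@cS2 _ _ _ hc h1 h2 (S :\ e)) //.
by move: hS; rewrite (cardsD1 e S) eS /=; lia.
Qed.

Lemma subU1 (V E : finType) (ends : E -> V * V) (A : {set E}) e :
  subrel (connect (adjE ends A)) (connect (adjE ends (e |: A))).
Proof.
apply: connect_sub => x y rxy; apply: connect1.
by rewrite adjE_U1 rxy.
Qed.

Lemma cS4 (V E : finType) (ends : E -> V * V) :
  connectedG ends ->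
  (forall S : {set E}, ~~ k_edge_cut ends 1 S) ->
  (forall S : {set E}, ~~ k_edge_cut ends 2 S) ->
  forall S : {set E}, #|S| = 4 -> (ncomp ends (~: S) <= 2)%N.
Proof.
move=> hc h1 h2 S hS.
have c2 := cS2 hc h1 h2; have c3 := cS3 hc h1 h2.
rewrite leqNgt; apply/negP => H3.
set A := ~: S in H3 *; set r := adjE ends A.
have symr := csym ends A.
have [x0 x0S] : exists e, e \in S by apply/set0Pn; rewrite -card_gt0 hS.
have cA : ncomp ends A = 3.
  have h3 : #|S :\ x0| = 3 by move: hS; rewrite (cardsD1 x0 S) x0S /=; lia.
  have := c3 _ h3; have := ncomp_step ends S x0; move: H3; rewrite /A; lia.
have ncx : forall x, x \in S -> ~~ connect r (ends x).1 (ends x).2.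
  move=> x xS; have := ncompU1 ends A x; rewrite /A setC_D1 -/A -/r.
  have : (ncomp ends (~: (S :\ x)) <= 2)%N.
    by apply: c3; move: hS; rewrite (cardsD1 x S) xS /=; lia.
  by rewrite cA; case: (connect r _ _) => /=; lia.
set rt := fingraph.root r.
set P := fun x => [set rt (ends x).1; rt (ends x).2].
set R := [set w | roots r w].
have cR : #|R| = 3.
  by rewrite -cA /ncomp /n_comp_mem; apply: eq_card => w; rewrite !inE andbT.
have PR : forall x, x \in S -> P x \in [set R :\ w | w in R].
  move=> x xS.
  have sub : P x \subset R.
    by apply/subsetP => w; rewrite !inE => /orP[]/eqP->; apply: roots_root.
  have c2P : #|P x| = 2.
    by rewrite cards2 (root_connect symr) ncx.
  have : #|R :\: P x| = 1%N.
    by rewrite cardsD (setIidPr sub) cR c2P.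
  move/eqP/cards1P => -[w Hw].
  have wR : w \in R.
    have : w \in R :\: P x by rewrite Hw set11.
    by rewrite inE => /andP[].
  apply/imsetP; exists w => //.
  apply/setP => z; have : (z \in R :\: P x) = (z \in [set w]) by rewrite Hw. have := subsetP sub z.
  rewrite in_setD1 in_setD in_set1.
  by case: (z \in P x); case: (z == w); case: (z \in R) => //= /(_ isT).
have [x [y [xS yS xy Pxy]]] :
    exists x y, [/\ x \in S, y \in S, x != y & P x = P y].
  case: (boolP [exists x in S, exists y in S, (x != y) && (P x == P y)]).
    case/exists_inP => x xS /exists_inP [y yS /andP[xy /eqP Pxy]].
    by exists x, y.
  rewrite negb_exists_in => /forall_inP H; exfalso.
  have inj : {in S &, injective P}.
    move=> x y xS yS Pxy; apply/eqP; apply/negPn/negP => nxy.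
    have := H x xS; rewrite negb_exists_in => /forall_inP /(_ y yS).
    by rewrite nxy Pxy eqxx.
  have := card_in_imset inj; rewrite hS.
  have : P @: S \subset [set R :\ w | w in R].
    by apply/subsetP => Q /imsetP[x xS ->]; apply: PR.
  move/subset_leq_card; have := leq_imset_card (fun w => R :\ w) R.
  rewrite cR; lia.
have conn : connect (adjE ends (x |: A)) (ends y).1 (ends y).2.
  have ry1 : rt (ends y).1 \in P x by rewrite Pxy !inE eqxx.
  have ry2 : rt (ends y).2 \in P x by rewrite Pxy !inE eqxx orbT.
  have nyy : rt (ends y).1 != rt (ends y).2.
    by rewrite (root_connect symr) ncx.
  have sub' := @subU1 _ _ ends A x.
  have ex := edge_in ends A x.
  move: ry1 ry2 nyy; rewrite !inE => /orP[]/eqP H1 /orP[]/eqP H2;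
    rewrite H1 H2 ?eqxx // => _.
  - move/(fingraph.rootP symr): H1 => H1; move/(fingraph.rootP symr): H2 => H2.
    apply: (connect_trans (sub' _ _ H1)); apply: (connect_trans (connect1 ex)).
    by apply: sub'; rewrite symr.
  - move/(fingraph.rootP symr): H1 => H1; move/(fingraph.rootP symr): H2 => H2.
    apply: (connect_trans (sub' _ _ H1)).
    rewrite adjE_sym in ex; apply: (connect_trans (connect1 ex)).
    by apply: sub'; rewrite symr.
have e1 := ncomp_conn conn.
have e2 := ncomp_le ends A x.
have : ncomp ends (y |: (x |: A)) = 1%N.
  rewrite /A setC_D1 setC_D1; apply: c2.
  move: hS; rewrite (cardsD1 x S) xS (cardsD1 y (S :\ x)) !inE eq_sym xy yS /=.
  lia.
rewrite e1 cA in e2 *; lia.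
Qed.

Lemma cSge4 (V E : finType) (ends : E -> V * V) :
  connectedG ends ->
  (forall S : {set E}, ~~ k_edge_cut ends 1 S) ->
  (forall S : {set E}, ~~ k_edge_cut ends 2 S) ->
  forall n (S : {set E}), #|S| = (n + 4)%N -> (ncomp ends (~: S) + 2 <= #|S|)%N.
Proof.
move=> hc h1 h2; elim=> [|n IH] S hS.
  by have := cS4 hc h1 h2 hS; rewrite hS; lia.
have [e eS] : exists e, e \in S by apply/set0Pn; rewrite -card_gt0 hS.
have h3 : #|S :\ e| = (n + 4)%N by move: hS; rewrite (cardsD1 e S) eS /=; lia.
have := IH _ h3; have := ncomp_step ends S e; move: hS; rewrite (cardsD1 e S) eS /=.
lia.
Qed.

Lemma classif (V E : finType) (ends : E -> V * V) :
  connectedG ends ->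
  (forall S : {set E}, ~~ k_edge_cut ends 1 S) ->
  (forall S : {set E}, ~~ k_edge_cut ends 2 S) ->
  forall S : {set E},
  let k := #|S| in let c := ncomp ends (~: S) in
  [/\ (1 <= c)%N, (c <= k + 1)%N, (#|V| <= #|E| - k + c)%N & (k <= #|E|)%N] /\
  [/\ (k <= 2 -> c = 1)%N, (k = 3 -> c <= 2)%N, (4 <= k -> c + 2 <= k)%N &
      k_edge_cut ends 3 S = (k == 3) && (c == 2)].
Proof.
move=> hc h1 h2 S k c.
have [v0 _] : exists v0 : V, true.
  have : (0 < #|V|)%N by have := ncomp_le_card ends setT; rewrite (eqP hc).
  by case/card_gt0P => v0 _; exists v0.
have g1 := ncomp_gt0 ends v0 (~: S).
have g2 := ncomp_union ends S (~: S).
rewrite setUC setUCr (eqP hc) in g2.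
have g3 := ncomp_low ends (~: S).
have g4 := cardsC S.
have g5 : (k <= #|E|)%N by rewrite /k -g4 leq_addr.
split; first (split => //; rewrite /c /k; lia).
have c3 := cS3 hc h1 h2 (S := S).
split.
- exact: cS2 hc h1 h2 S.
- exact: c3.
- move=> H4; have := cSge4 hc h1 h2 (n := (k - 4)%N) (S := S).
  rewrite /c /k; lia.
- rewrite /k_edge_cut /edge_cut (eqP hc) -/k -/c.
  case: eqP => //= Hk; have := c3 Hk; rewrite -/c; lia.
Qed.

Local Open Scope ring_scope.

Lemma sum_if (T : finType) (P : pred T) (a : int) :
  \sum_(x : T) (if P x then a else 0) = a *+ #|[set x | P x]|.
Proof. by rewrite -big_mkcond /= sumr_const cardsE. Qed.

Lemma flow_coef (V E : finType) (ends : E -> V * V) j :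
  (flow_poly ends)`_j = \sum_(S : {set E})
     (-1) ^+ #|S| * (j == (#|~: S| + ncomp ends (~: S) - #|V|)%N)%:R.
Proof.
rewrite /flow_poly coef_sum (reindex_inj (@setC_inj E)) /=.
apply: eq_bigr => S _; rewrite coefZ coefXn.
have := cardsC S; move=> h; by rewrite -h addnK.
Qed.

Lemma flow_coefs (V E : finType) (ends : E -> V * V) :
  connectedG ends ->
  (forall S : {set E}, ~~ k_edge_cut ends 1 S) ->
  (forall S : {set E}, ~~ k_edge_cut ends 2 S) ->
  (2 <= #|E|)%N ->
  let R := (#|E| + 1 - #|V|)%N in
  [/\ (2 <= R)%N, (forall j, (R < j)%N -> (flow_poly ends)`_j = 0),
      (flow_poly ends)`_R = 1, (flow_poly ends)`_R.-1 = - (#|E|%:Z)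
   & (flow_poly ends)`_R.-2 = ('C(#|E|, 2))%:Z - (n_3cuts ends)%:Z].
Proof.
move=> hc h1 h2 hE R.
have cl := classif hc h1 h2.
have Ek (S : {set E}) : #|~: S| = (#|E| - #|S|)%N.
  have h : (#|S| + #|~: S| = #|E|)%N := cardsC S; lia.
have R2 : (2 <= R)%N.
  have : (0 < #|[set S : {set E} | #|S| == 2%N]|)%N by rewrite card_draws bin_gt0.
  case/card_gt0P => S; rewrite inE => /eqP HS.
  have [[a1 a2 a3 a4] [b1 b2 b3 b4]] := cl S.
  move: a1 a2 a3 a4 b1 b2 b3; rewrite HS /R => a1 a2 a3 a4 b1 b2 b3.
  have := b1 (leqnn 2); lia.
split => //.
- move=> j Hj; rewrite flow_coef big1 // => S _.
  have [[a1 a2 a3 a4] [b1 b2 b3 b4]] := cl S; rewrite Ek.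
  move: a1 a2 a3 a4 b1 b2 b3; move: #|S| (ncomp ends (~: S)) => k c.
  move=> a1 a2 a3 a4 b1 b2 b3.
  by case: eqP => H; [move: Hj; rewrite /R; lia | rewrite mulr0].
- rewrite flow_coef (eq_bigr (fun S : {set E} => if #|S| == 0%N then 1 else 0 : int)).
    by rewrite sum_if card_draws bin0.
  move=> S _; have [[a1 a2 a3 a4] [b1 b2 b3 b4]] := cl S; rewrite Ek.
  move: a1 a2 a3 a4 b1 b2 b3; move: #|S| (ncomp ends (~: S)) => k c.
  move=> a1 a2 a3 a4 b1 b2 b3.
  have : k = 0%N \/ (1 <= k)%N by lia.
  case=> [Hk|Hk].
    subst k; case: eqP => H; [by [] | move: H; rewrite /R; lia].
  case: eqP => H; [move: H; rewrite /R; lia|].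
  by rewrite mulr0; case: eqP => //; lia.
- rewrite flow_coef (eq_bigr (fun S : {set E} => if #|S| == 1%N then -1 else 0 : int)).
    by rewrite sum_if card_draws bin1 mulNrn natz.
  move=> S _; have [[a1 a2 a3 a4] [b1 b2 b3 b4]] := cl S; rewrite Ek.
  move: a1 a2 a3 a4 b1 b2 b3; move: #|S| (ncomp ends (~: S)) => k c.
  move=> a1 a2 a3 a4 b1 b2 b3.
  have : k = 1%N \/ k <> 1%N by lia.
  case=> [Hk|Hk].
    subst k; case: eqP => H; [by [] | move: H; rewrite /R; lia].
  case: eqP => H; [move: H; rewrite /R; lia|].
  by rewrite mulr0; case: eqP => //; lia.
- rewrite flow_coef (eq_bigr (fun S : {set E} => (if #|S| == 2%N then 1 else 0 : int)
      - (if k_edge_cut ends 3 S then 1 else 0))).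
    by rewrite sumrB !sum_if card_draws !natz.
  move=> S _; have [[a1 a2 a3 a4] [b1 b2 b3 b4]] := cl S; rewrite Ek b4.
  move: a1 a2 a3 a4 b1 b2 b3; move: #|S| (ncomp ends (~: S)) => k c.
  move=> a1 a2 a3 a4 b1 b2 b3.
  have : k = 2%N \/ (k = 3 /\ c = 2)%N \/ (k <> 2 /\ ~ (k = 3 /\ c = 2))%N by lia.
  case=> [Hk|[[Hk Hc]|[Hk Hc]]].
  + subst k; rewrite b1 //; case: eqP => H; [by [] | move: H; rewrite /R; lia].
  + subst k c; case: eqP => H; [by [] | move: H; rewrite /R; lia].
  + case: eqP => H; [move: H; rewrite /R; lia|].
    rewrite mulr0; case: eqP => // _; case: eqP => //= Hk3; case: eqP => //=.
    lia.
Qed.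

Lemma flow1 (V E : finType) (ends : E -> V * V) :
  (0 < #|E|)%N -> (flow_poly ends).[1] = 0.
Proof.
move=> E0; rewrite /flow_poly horner_sum.
under eq_bigr => A _ do rewrite hornerZ hornerXn expr1n mulr1.
have [e0 _] : exists e0 : E, true by case/card_gt0P: E0 => x _; exists x.
pose h (A : {set E}) := if e0 \in A then A :\ e0 else e0 |: A.
have hK : involutive h.
  move=> A; rewrite /h; case H: (e0 \in A).
    by rewrite setD11 setD1K.
  by rewrite setU11 setU1K ?H.
set f := fun A : {set E} => (-1) ^+ (#|E| - #|A|) : int.
have fh A : f (h A) = - f A.
  have leA : (#|A| <= #|E|)%N by apply: max_card.
  rewrite /f /h; case: ifP => H.
    have c1 : #|A| = (#|A :\ e0|).+1 by rewrite (cardsD1 e0 A) H.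
    have -> : (#|E| - #|A :\ e0| = (#|E| - #|A|).+1)%N by lia.
    by rewrite exprS mulN1r.
  have c1 : #|e0 |: A| = (#|A|).+1 by rewrite cardsU1 H.
  have leA' : (#|A|.+1 <= #|E|)%N by rewrite -c1 max_card.
  have -> : (#|E| - #|A| = (#|E| - #|e0 |: A|).+1)%N by lia.
  by rewrite exprS mulN1r opprK.
rewrite -/f.
set s := \sum_(A : {set E}) f A.
have H : s = - s.
  rewrite {1}/s (reindex_inj (inv_inj hK)) /=.
  under eq_bigr => A _ do rewrite fh.
  by rewrite sumrN.
by move/eqP: H; rewrite -addr_eq0 -mulr2n mulrn_eq0 /= => /eqP.
Qed.

Lemma vieta (F : comNzRingType) (s : seq F) :
  let Q := (\prod_(z <- s) ('X - z%:P)) * 'X^2 in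
  [/\ Q`_(size s).+2 = 1, Q`_(size s).+1 = - \sum_(z <- s) z &
      2 * Q`_(size s) = (\sum_(z <- s) z) ^+ 2 - \sum_(z <- s) z ^+ 2].
Proof.
elim: s => [|z s [IH1 IH2 IH3]] /=.
  by rewrite !big_nil mul1r !coefXn /=; split => //; ring.
set Q := (\prod_(z <- s) ('X - z%:P)) * 'X^2.
have eQ : (\prod_(j <- z :: s) ('X - j%:P)) * 'X^2 = ('X - z%:P) * Q.
  by rewrite big_cons -mulrA.
have cQ k : (('X - z%:P) * Q)`_k.+1 = Q`_k - z * Q`_k.+1.
  by rewrite mulrBl coefB coefXM coefCM.
have top : Q`_(size s).+3 = 0.
  rewrite coefMXn /= subn2 /=; apply: nth_default.
  by rewrite size_prod_XsubC.
rewrite eQ !cQ IH1 IH2 top !big_cons; split.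
- by rewrite mulr0 subr0.
- by rewrite mulr1; ring.
- by rewrite mulrBr IH3; ring.
Qed.

Lemma psum_seq0 (R : numDomainType) (T : eqType) (s : seq T) (f : T -> R) :
  (forall z, z \in s -> 0 <= f z) -> \sum_(z <- s) f z = 0 ->
  forall z, z \in s -> f z = 0.
Proof.
elim: s => [|a s IH] //= H; rewrite big_cons => /eqP.
have ha : 0 <= f a by apply: H; rewrite inE eqxx.
have hs : 0 <= \sum_(z <- s) f z.
  by rewrite big_seq; apply: sumr_ge0 => z zs; apply: H; rewrite inE zs orbT.
rewrite paddr_eq0 // => /andP[/eqP fa /eqP fs] z; rewrite inE => /orP[/eqP->|zs].
  exact: fa.
apply: IH zs => // y ys; apply: H; rewrite inE ys orbT //.
Qed.

Lemma cs (s : seq algC) : (forall z, z \in s -> z \is Num.real) ->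
  0 <= (size s)%:R * \sum_(z <- s) z ^+ 2 - (\sum_(z <- s) z) ^+ 2 /\
  ((size s)%:R * \sum_(z <- s) z ^+ 2 - (\sum_(z <- s) z) ^+ 2 = 0 ->
     forall z, z \in s -> (size s)%:R * z = \sum_(z <- s) z).
Proof.
move=> Hr.
case: s Hr => [|a s0] Hr.
  by rewrite !big_nil /= mul0r expr0n /= subr0; split.
set s := a :: s0 in Hr *.
set m : algC := (size s)%:R; set sg := \sum_(z <- s) z; set A := \sum_(z <- s) z ^+ 2.
have key : \sum_(z <- s) (m * z - sg) ^+ 2 = m * (m * A - sg ^+ 2).
  rewrite (eq_bigr (fun z => m ^+ 2 * z ^+ 2 + ((- (2 * m * sg)) * z + sg ^+ 2))); last first.
    by move=> z _; ring.
  rewrite !big_split /= -!mulr_sumr big_const_seq count_predT iter_addr_0 -/A -/sg.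
  rewrite -mulr_natl -/m; ring.
have sgr : sg \is Num.real.
  by rewrite /sg big_seq; apply: rpred_sum => z zs; apply: Hr.
have ge z : z \in s -> 0 <= (m * z - sg) ^+ 2.
  by move=> zs; rewrite -realEsqr rpredB // rpredM // ?realn // Hr.
have sge : 0 <= \sum_(z <- s) (m * z - sg) ^+ 2.
  by rewrite big_seq; apply: sumr_ge0.
have m0 : 0 < m by rewrite /m ltr0n.
split; first by rewrite -(pmulr_rge0 _ m0) -key.
move=> X0 z zs.
have h := psum_seq0 ge (eq_trans key (eq_trans (congr1 _ X0) (mulr0 _))) zs.
by move/eqP: h; rewrite sqrf_eq0 subr_eq0 => /eqP.
Qed.

Lemma intrnat (n : nat) : ((n%:Z)%:~R : algC) = n%:R.
Proof. by rewrite -pmulrn. Qed.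

Lemma newton (F : {poly int}) (R e g : nat) :
  (2 <= R)%N -> (1 <= e)%N ->
  (forall j, (R < j)%N -> F`_j = 0) -> F`_R = 1 -> F`_R.-1 = - e%:Z ->
  F`_R.-2 = ('C(e, 2))%:Z - g%:Z -> F.[1] = 0 ->
  (forall z : algC, root (map_poly intr F) z -> z \is Num.real) ->
  ((e%:Z - 1) * (e%:Z - R%:Z) <= 2 * (R.-1)%:Z * g%:Z) /\
  ((e%:Z - 1) * (e%:Z - R%:Z) = 2 * (R.-1)%:Z * g%:Z ->
     ((R.-1)%:Z %| e%:Z - 1)%Z).
Proof.
move=> R2 e1 Fhi F1 Fm1 Fm2 Fone Hreal.
have szF : size F = R.+1.
  apply/eqP; rewrite eqn_leq; apply/andP; split.
    by apply/leq_sizeP => j Hj; apply: Fhi.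
  rewrite ltnNge; apply/negP => /leq_sizeP /(_ R (leqnn R)).
  by rewrite F1 => /eqP; rewrite oner_eq0.
have lcF : lead_coef F = 1 by rewrite lead_coefE szF.
set Fc := map_poly (intr : int -> algC) F.
have coefc j : Fc`_j = (F`_j)%:~R by rewrite coef_map.
have lcFc : lead_coef Fc = 1.
  by rewrite lead_coef_map_inj ?lcF //; apply: intr_inj.
have [rs Hrs] := closed_field_poly_normal Fc.
rewrite lcFc scale1r in Hrs.
have szFc : size Fc = R.+1 by rewrite size_map_inj_poly //; apply: intr_inj.
have szrs : size rs = R by move: szFc; rewrite Hrs size_prod_XsubC => -[].
have r1 : 1 \in rs.
  rewrite -root_prod_XsubC -Hrs /root.
  by rewrite -(rmorph1 (intr : int -> algC)) horner_map Fone rmorph0.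
set s := rem 1 rs.
have Hfs : Fc = ('X - 1%:P) * \prod_(z <- s) ('X - z%:P).
  by rewrite Hrs (perm_big _ (perm_to_rem r1)) big_cons.
have szs : size s = R.-1 by rewrite /s size_rem // szrs.
have sreal z : z \in s -> z \is Num.real.
  by move=> zs; apply: Hreal; rewrite -/Fc Hfs rootM root_prod_XsubC zs orbT.
have [V1 V2 V3] := vieta s.
set Q := (\prod_(z <- s) ('X - z%:P)) * 'X^2 in V1 V2 V3.
have eX : Fc * 'X^2 = ('X - 1%:P) * Q by rewrite Hfs -mulrA.
have cX k : (('X - 1%:P) * Q)`_k.+1 = Q`_k - Q`_k.+1.
  by rewrite mulrBl coefB coefXM coefCM mul1r.
move: szs V1 V2 V3; set m := size s => szs V1 V2 V3.
have HR : R = m.+1 by rewrite szs; case: R R2 {Fhi F1 Fm1 Fm2 szF szFc szrs szs} => [|[]].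
rewrite HR /= in Fm1 Fm2 R2 *.
have m1 : (1 <= m)%N by [].
set sg := \sum_(z <- s) z in V2 V3; set A := \sum_(z <- s) z ^+ 2 in V3.
have E1 : Fc`_m = - sg - 1.
  have := coefMXn 2 Fc m.+2; rewrite ltnNge /= subn2 /= => <-.
  by rewrite eX cX V1 V2.
have E2 : Fc`_m.-1 = Q`_m + sg.
  have := coefMXn 2 Fc m.+1; rewrite ltnNge ltnS m1 /= subn2 /= => <-.
  by rewrite eX cX V2 opprK.
rewrite coefc /= Fm1 rmorphN /= intrnat in E1.
rewrite coefc /= Fm2 rmorphB /= !intrnat in E2.
set ec : algC := e%:R in E1 E2; set gc : algC := g%:R in E2.
set Cc : algC := ('C(e, 2))%:R in E2.
have eC : 2 * Cc = ec * (ec - 1).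
  have := mul_bin_diag e 1; rewrite bin1 => H.
  rewrite /Cc /ec -(natrM _ 2) -H natrM; congr (_ * _).
  by rewrite -subn1 natrB.
have esg : sg = ec - 1 by rewrite -[ec]opprK E1; ring.
have eQ : Q`_m = Cc - gc - sg by rewrite E2; ring.
have eA : A = sg ^+ 2 - 2 * Q`_m by rewrite V3; ring.
have [cs1 cs2] := cs sreal.
rewrite -/m -/A -/sg in cs1 cs2.
set Y : int := 2 * (m.+1.-1)%:Z * g%:Z - (e%:Z - 1) * (e%:Z - (m.+1)%:Z).
have eY : (Y%:~R : algC) = m%:R * A - sg ^+ 2.
  rewrite /Y !(intrD, intrM, intrB, intrN) !intrnat /= -/ec -/gc.
  have -> : m%:R * A - sg ^+ 2 = m%:R * A - sg ^+ 2 + m%:R * (2 * Cc - ec * (ec - 1)).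
    by rewrite eC subrr mulr0 addr0.
  rewrite eA eQ esg -natr1; ring.
split.
  by rewrite -subr_ge0 -/Y -(ler0z algC) eY.
move=> Heq.
have Y0 : Y = 0 by rewrite /Y Heq subrr.
have X0 : m%:R * A - sg ^+ 2 = 0 by rewrite -eY Y0.
have all_eq := cs2 X0.
set z := nth 0 s 0.
have zs : z \in s by apply: mem_nth.
have mz := all_eq z zs.
have zrat : z \in Crat.
  have mn0 : (m%:R : algC) != 0 by rewrite pnatr_eq0 -lt0n.
  have -> : z = sg / m%:R by rewrite -mz mulrAC divff // mul1r.
  by rewrite esg rpred_div ?rpredB ?rpred_nat ?rpred1.
have zA : z \in Aint.
  apply: (@root_monic_Aint Fc).
  - by rewrite Hfs rootM root_prod_XsubC zs orbT.
  - by apply/monicP.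
  - by apply/polyOverP => i; rewrite coefc; apply: rpred_int.
have /intrP [k ek] := Cint_rat_Aint zrat zA.
apply/dvdzP; exists k; apply: (@intr_inj algC).
rewrite rmorphB rmorphM /= !intrnat -ek mulrC mz esg /=.
by rewrite rmorph1.
Qed.

Unset Implicit Arguments.

Lemma intrnatR (R : pzRingType) (n : nat) : ((n%:Z)%:~R : R) = n%:R.
Proof. by rewrite -pmulrn. Qed.

Theorem lemma5p2 (V E : finType) (ends : E -> V * V) :
  connectedG ends ->
  (forall S : {set E}, ~~ k_edge_cut ends 1 S) ->
  (forall S : {set E}, ~~ k_edge_cut ends 2 S) ->
  (forall z : algC, root (map_poly (intr : int -> algC) (flow_poly ends)) z ->
     z \is Num.real) ->
  let r : int := (#|E|%:Z - #|V|%:Z + 1)%R in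
  let lhs : rat := (n_3cuts ends)%:R in
  let rhs : rat := ((#|E|%:R - r%:~R) * (#|E|%:R - 1)) / (2 * (r%:~R - 1)) in
  rhs <= lhs /\ (~~ (r - 1 %| #|E|%:Z - 1)%Z -> rhs < lhs).
Proof.
move=> hc h1 h2 hreal r lhs rhs.
have lhs0 : 0 <= lhs by rewrite /lhs ler0n.
have [E0|[E1|E2]] : (#|E| = 0 \/ #|E| = 1 \/ 2 <= #|E|)%N by lia.
- have V1 : #|V| = 1%N.
    have : (setT : {set E}) = set0 by apply/setP => x; move: E0 => /card0_eq/(_ x); rewrite !inE.
    by move: hc; rewrite /connectedG => /eqP; move=> <- ->; rewrite ncomp0.
  have r0 : r = 0 by rewrite /r E0 V1.
  have rh0 : rhs = 0 by rewrite /rhs r0 E0 /=; rewrite !mul0r.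
  rewrite rh0; split => // /negP []; rewrite r0 sub0r.
  by apply/dvdzP; exists (- (#|E|%:Z - 1)); rewrite mulrN1 opprK.
- have rh0 : rhs = 0 by rewrite /rhs E1 subrr mulr0 mul0r.
  rewrite rh0; split => // /negP []; rewrite E1 subrr.
  by rewrite dvdz0.
have [R2 Fhi F1 Fm1 Fm2] := flow_coefs hc h1 h2 E2.
set R := (#|E| + 1 - #|V|)%N in R2 Fhi F1 Fm1 Fm2.
have Fone := flow1 ends (ltnW E2).
have [N1 N2] := newton R2 (ltnW E2) Fhi F1 Fm1 Fm2 Fone hreal.
have rR : r = R%:Z by rewrite /r /R; lia.
set m := R.-1 in N1 N2.
have Rm : R = m.+1 by rewrite /m prednK // (ltnW R2).
rewrite Rm in rR N1 N2.
set e := #|E| in N1 N2 rR rhs *; set g := n_3cuts ends in N1 N2 lhs lhs0 *.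
have m0 : (0 < m)%N by move: R2; rewrite Rm.
have erhs : rhs = ((e%:R - m%:R - 1) * (e%:R - 1)) / (2 * m%:R).
  rewrite /rhs rR intrnatR -natr1; congr (_ / _); ring.
have den0 : (0 : rat) < 2 * m%:R by rewrite mulr_gt0 // ltr0n.
have key : ((e%:R - m%:R - 1) * (e%:R - 1) <= g%:R * (2 * m%:R) :> rat) =
           ((e%:Z - 1) * (e%:Z - (m.+1)%:Z) <= 2 * m%:Z * g%:Z).
  rewrite -(ler_int rat) !(intrD, intrM, intrB, intrN) !intrnatR -natr1.
  congr (_ <= _); ring.
have keyeq : ((e%:R - m%:R - 1) * (e%:R - 1) == g%:R * (2 * m%:R) :> rat) =
           ((e%:Z - 1) * (e%:Z - (m.+1)%:Z) == 2 * m%:Z * g%:Z).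
  rewrite -(eqr_int rat) !(intrD, intrM, intrB, intrN) !intrnatR -natr1.
  congr (_ == _); ring.
have le : rhs <= lhs by rewrite erhs ler_pdivrMr // key.
split => // ndiv.
rewrite lt_neqAle le andbT; apply/negP => /eqP eq.
move: ndiv; rewrite rR (_ : (m.+1)%:Z - 1 = m%:Z); last by lia.
rewrite N2 //; apply/eqP; rewrite -keyeq.
by rewrite -/lhs -eq erhs divfK // gt_eqF.
Qed.
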